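(* Let $p$ be a prime, $\mathcal{V}=\mathbb{F}_p^n$, and let $\mathcal{V}$ act on $\mathbb{Z}^{\mathcal{V}}$ by $u\cdot e_v=e_{u+v}$ (translation of the standard basis). Let $x=\sum_{v\in\mathcal{V}}x_ve_v\in\mathbb{Z}^{\mathcal{V}}$ and assume either $p$ is odd or $\sum_{v\in\mathcal{V}}x_v$ is divisible by $4$. If the stabilizer $\operatorname{Stab}_{\mathcal{V}}(x)$ is nontrivial, then $\sum_{v\in\mathcal{V}}x_v v=0$ in $\mathcal{V}$. In particular, if $\sum_v x_v=0$ and $\sum_v x_vv\neq0$, then $\operatorname{Stab}_{\mathcal{V}}(x)=\{0\}$.
   Context: $\mathbb{Z}^{\mathcal{V}}$ is the free abelian group with standard basis $\{e_v\}_{v\in\mathcal{V}}$; in $\sum_v x_vv$ the integers $x_v$ act on $\mathcal{V}$ via reduction mod $p$. *)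

(* Defs.v *)
From HB Require Import structures.
From mathcomp Require Import all_boot all_order all_algebra.
Set Implicit Arguments. Unset Strict Implicit. Unset Printing Implicit Defensive.
Import Order.TTheory GRing.Theory Num.Theory.
Local Open Scope ring_scope.

(* V = F_p^n is modelled as row vectors 'rV['F_p]_n.
   An element x = sum_v x_v e_v of Z^V is modelled by its coefficient
   function x : V -> int (V is finite, so every such function is an element). *)
Notation Vsp p n := 'rV['F_p]_n.

(* Action of V on Z^V: u . e_v = e_(u+v); hence (u . x)_w = x_(w - u). *)
Definition transl (p n : nat) (u : Vsp p n) (x : Vsp p n -> int) : Vsp p n -> int :=
  fun w => x (w - u).

Definition in_stab (p n : nat) (x : Vsp p n -> int) (u : Vsp p n) : Prop :=
  transl u x = x.

Definition wsum (p n : nat) (x : Vsp p n -> int) : Vsp p n :=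
  \sum_(v : Vsp p n) v *~ x v.

Definition tsum (p n : nat) (x : Vsp p n -> int) : int :=
  \sum_(v : Vsp p n) x v.

(* Main.v *)
Require Import Defs.
From mathcomp Require Import all_boot all_order all_algebra.
Import Order.TTheory GRing.Theory Num.Theory.
Local Open Scope ring_scope.

Lemma part1 (p n : nat) (x : 'rV['F_p]_n -> int) (u : 'rV['F_p]_n) :
  prime p -> (odd p \/ (4 %| tsum x)%Z) -> u != 0 -> in_stab x u -> wsum x = 0.
Proof.
move=> pp hyp u0 st.
have vp : forall v : 'rV['F_p]_n, v *+ p = 0.
  by move=> v; rewrite -scaler_nat pchar_Fp_0 // scale0r.
have [i ui] : exists i, u 0 i != 0.
  apply/existsP; apply: contraR u0 => /existsPn H; apply/eqP/rowP => j.
  by rewrite mxE; apply/eqP; move: (H j); rewrite negbK.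
set a := u 0 i.
pose f (v : 'rV['F_p]_n) := v 0 i / a.
pose g (v : 'rV['F_p]_n) := v - f v *: u.
have fu : forall w (c : 'F_p), f (w + c *: u) = f w + c.
  move=> w c; rewrite /f !mxE mulrDl -mulrA divff // mulr1 //.
have gK : forall v, f (g v) = 0.
  by move=> v; rewrite /g -scaleNr fu addrN.
have invn : forall (m : nat) w, x (w + u *+ m) = x w.
  elim=> [|m IH] w; first by rewrite mulr0n addr0.
  rewrite mulrSr addrA -(IH w).
  have := congr1 (fun h => h (w + u *+ m + u)) st.
  by rewrite /transl /= addrK => ->.
have inv : forall w (c : 'F_p), x (w + c *: u) = x w.
  move=> w c; rewrite -[c](@natr_Zp (Zp_trunc (pdiv p))) scaler_nat; exact: invn.
have fib : forall (R : zmodType) (F : 'rV['F_p]_n -> R) w, f w == 0 ->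
    \sum_(v | g v == w) F v = \sum_(c : 'F_p) F (w + c *: u).
  move=> R F w /eqP fw.
  rewrite (reindex_onto (fun c : 'F_p => w + c *: u) f); last first.
    by move=> v /eqP <-; rewrite /g subrK.
  apply: eq_bigl => c; rewrite fu fw add0r eqxx andbT /g fu fw add0r addrK eqxx //.
have dec : forall (R : zmodType) (F : 'rV['F_p]_n -> R),
    \sum_v F v = \sum_(w | f w == 0) \sum_(c : 'F_p) F (w + c *: u).
  move=> R F; rewrite (partition_big g (fun w => f w == 0)); last by move=> v _; rewrite gK.
  by apply: eq_bigr => w fw; rewrite -fib.
pose A := \sum_(w | f w == 0) x w.
have hT : tsum x = A *+ p.
  rewrite /tsum dec /A -sumrMnl; apply: eq_bigr => w _.
  under eq_bigr do rewrite inv.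
  by rewrite sumr_const card_Fp.
have hS : wsum x = ((\sum_(c : 'F_p) c) *: u) *~ A.
  rewrite /wsum dec /A raddf_sum /=; apply: eq_bigr => w _.
  under eq_bigr do rewrite inv.
  rewrite -mulrz_suml big_split /= sumr_const card_Fp // vp add0r.
  by rewrite scaler_suml.
have odd0 : odd p -> \sum_(c : 'F_p) c = 0.
  move=> op; set s := \sum_(c : 'F_p) c.
  have e : s = - s.
    rewrite {1}/s (reindex_inj (@oppr_inj _)) /=. rewrite sumrN.  done.
  have : 2%:R * s = 0 by rewrite mulr2n mulrDl mul1r {1}e addNr.
  move/eqP; rewrite mulf_eq0 => /orP [|/eqP //].
  rewrite -(dvdn_pcharf (pchar_Fp pp)) => /(dvdn_leq (isT : 0 < 2)%N).
  move=> le2; have e2 : odd p = odd 2 by congr odd; apply/eqP; rewrite eqn_leq le2 prime_gt1.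
  by move: op; rewrite e2 => /negP.
rewrite hS; case: (boolP (odd p)) => op; first by rewrite odd0 // scale0r mul0rz.
case: hyp; first by rewrite (negbTE op).
have p2 : p = 2%N by case: (even_prime pp) => //; rewrite (negbTE op).
have v2 : forall v : 'rV['F_p]_n, v *+ 2 = 0.
  by move=> v; rewrite -(vp v); congr (_ *+ _); rewrite p2.
have hp : A *+ p = A * 2 by rewrite p2 mulr_natr.
rewrite hT hp => /dvdzP [q hq].
have hA : A = q * 2.
  apply: (@mulIf _ 2) => //; by rewrite -mulrA -[2 * 2]/(4 : int) -hq.
by rewrite hA mulrzA -[_ *~ 2]/(_ *+ 2) v2.
Qed.

Theorem lemma14p2 (p n : nat) (x : 'rV['F_p]_n -> int) :
  prime p ->
  ((odd p \/ (4 %| tsum x)%Z) ->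
     (exists u : 'rV['F_p]_n, u != 0 /\ in_stab x u) -> wsum x = 0) /\
  (tsum x = 0 -> wsum x != 0 -> forall u, in_stab x u -> u = 0).
Proof.
move=> pp; split.
  by move=> h [u [u0 st]]; exact: (@part1 p n x u pp h u0 st).
move=> t0 w0 u st; apply/eqP; apply: contraNT w0 => u0.
by apply/eqP; apply: (@part1 p n x u pp _ u0 st); right; rewrite t0 dvdz0.
Qed.
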